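(* Let $X$ be a $\mathbb{Q}$-factorial projective toric variety defined over $\overline{\mathbb{Q}}$ and let $f\colon X\to X$ be a surjective toric morphism. Then the set of pre-periodic points of $f$ is Zariski dense in $X$.
   Context: A toric morphism is a morphism of toric varieties induced by a map of lattices compatible with the fans (equivariant with respect to the torus actions). A point $x$ is pre-periodic for $f$ if $f^{n}(x)=f^{m}(x)$ for some $0\le n<m$. *)

(* Defs.v *)
(* Toric varieties X_Sigma over Qbar (= algC), built from a
   fan Sigma in N_Q = Q^n, N = M = Z^n (row vectors). *)
From HB Require Import structures.
From mathcomp Require Import all_boot all_order all_algebra all_field.
Set Implicit Arguments. Unset Strict Implicit. Unset Printing Implicit Defensive.
Import Order.TTheory GRing.Theory Num.Theory.
Local Open Scope ring_scope.

Section Toric.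
Variable n : nat.

Definition toQ (v : 'rV[int]_n) : 'rV[rat]_n := map_mx intr v.
Definition pairQ (m u : 'rV[rat]_n) : rat := \sum_i m 0 i * u 0 i.
Definition pairZ (m v : 'rV[int]_n) : int := \sum_i m 0 i * v 0 i.

(* a rational polyhedral cone, given by a finite list of lattice generators *)
Definition cone := seq 'rV[int]_n.

Definition in_cone (s : cone) (u : 'rV[rat]_n) : Prop :=
  exists l : 'I_(size s) -> rat,
    (forall i, 0 <= l i) /\ u = \sum_i l i *: toQ (nth 0 s i).

Definition cone_eq (s t : cone) : Prop := forall u, in_cone s u <-> in_cone t u.
Definition cone_sub (s t : cone) : Prop := forall u, in_cone s u -> in_cone t u.

Definition in_dual (s : cone) (m : 'rV[int]_n) : bool := all (fun g => 0 <= pairZ m g) s.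
Definition in_perp (s : cone) (m : 'rV[int]_n) : bool := all (fun g => pairZ m g == 0) s.

Definition is_face (t s : cone) : Prop :=
  exists m, in_dual s m /\
    forall u, in_cone t u <-> (in_cone s u /\ pairQ (toQ m) u = 0).

Definition strongly_convex (s : cone) : Prop :=
  forall u, in_cone s u -> in_cone s (- u) -> u = 0.

Definition is_fan (k : nat) (F : 'I_k -> cone) : Prop :=
  [/\ forall i, strongly_convex (F i),
      forall i j, cone_eq (F i) (F j) -> i = j,
      forall i t, is_face t (F i) -> exists j, cone_eq (F j) t &
      forall i j, exists l, (forall u, in_cone (F l) u <-> (in_cone (F i) u /\ in_cone (F j) u))
                            /\ is_face (F l) (F i) /\ is_face (F l) (F j)].

Definition complete_fan k (F : 'I_k -> cone) : Prop := forall u, exists i, in_cone (F i) u.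

Definition simplicial (s : cone) : Prop :=
  exists t : cone, cone_eq t s /\
    row_free (\matrix_(i < size t, j < n) (toQ (nth 0 t i)) 0 j).

(* X_Sigma is Q-factorial iff every cone of Sigma is simplicial *)
Definition Qfactorial_fan k (F : 'I_k -> cone) : Prop := forall i, simplicial (F i).

Definition maximal_cone k (F : 'I_k -> cone) (i : 'I_k) : Prop :=
  forall j, cone_sub (F i) (F j) -> i = j.

(* X_Sigma is projective iff Sigma is complete and carries a strictly convex
   support function (CLS Thm 7.2.10): linear functionals m_sigma on maximal
   cones with <m_sigma,u> = min_sigma' <m_sigma',u> exactly on sigma. *)
Definition projective_fan k (F : 'I_k -> cone) : Prop :=
  complete_fan F /\
  exists m : 'I_k -> 'rV[rat]_n,
    forall i j u, maximal_cone F i -> maximal_cone F j -> in_cone (F i) u ->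
      pairQ (m i) u <= pairQ (m j) u /\
      (pairQ (m i) u = pairQ (m j) u -> in_cone (F j) u).

(* Qbar-points of X_Sigma: a point of the orbit O(tau) is a pair (tau, x) with
   x : M -> Qbar supported exactly on tau^perp cap M and restricting to a group
   homomorphism tau^perp cap M -> Qbar^*.  Its coordinates in the chart U_sigma
   (tau a face of sigma) are m |-> x m for m in sigma^vee cap M. *)
Definition tpoint k := ('I_k * ('rV[int]_n -> algC))%type.

Definition is_point k (F : 'I_k -> cone) (p : tpoint k) : Prop :=
  [/\ p.2 0 = 1,
      forall m, (p.2 m != 0) = in_perp (F p.1) m &
      forall m m', in_perp (F p.1) m -> in_perp (F p.1) m' ->
        p.2 (m + m') = p.2 m * p.2 m'].

Definition in_chart k (F : 'I_k -> cone) (i : 'I_k) (p : tpoint k) : Prop :=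
  is_face (F p.1) (F i).

(* regular functions on U_sigma: finite Qbar-combinations of characters chi^m,
   m in sigma^vee cap M *)
Definition laurent := seq (algC * 'rV[int]_n).
Definition eval_l k (g : laurent) (p : tpoint k) : algC := \sum_(c <- g) c.1 * p.2 c.2.

(* Zariski-closed subsets of X_Sigma(Qbar): closed in every affine chart *)
Definition zclosed k (F : 'I_k -> cone) (Z : tpoint k -> Prop) : Prop :=
  forall i, exists G : laurent -> Prop,
    (forall g, G g -> all (fun c => in_dual (F i) c.2) g) /\
    forall p, is_point F p -> in_chart F i p ->
      (Z p <-> forall g, G g -> eval_l g p = 0).

Definition zdense k (F : 'I_k -> cone) (S : tpoint k -> Prop) : Prop :=
  forall Z, zclosed F Z -> (forall p, is_point F p -> S p -> Z p) ->
    forall p, is_point F p -> Z p.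

(* toric morphism X_Sigma -> X_Sigma induced by the lattice map N -> N,
   u |-> u *m phi, compatible with the fan; on points the orbit O(tau) goes to
   O(tau'), tau' the smallest cone containing phi(tau), and characters pull
   back along the dual map m |-> m *m phi^T. *)
Definition phiQ (phi : 'M[int]_n) : 'M[rat]_n := map_mx intr phi.

Definition is_toric_morphism k (F : 'I_k -> cone) (phi : 'M[int]_n)
    (f : tpoint k -> tpoint k) : Prop :=
  (forall i, exists j, forall u, in_cone (F i) u -> in_cone (F j) (u *m phiQ phi)) /\
  forall p, is_point F p ->
    [/\ forall u, in_cone (F p.1) u -> in_cone (F (f p).1) (u *m phiQ phi),
        forall l, (forall u, in_cone (F p.1) u -> in_cone (F l) (u *m phiQ phi)) ->
                  cone_sub (F (f p).1) (F l) &
        forall m, (f p).2 m = if in_perp (F (f p).1) m then p.2 (m *m phi^T) else 0].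

Definition surjective_on k (F : 'I_k -> cone) (f : tpoint k -> tpoint k) : Prop :=
  forall q, is_point F q -> exists p, is_point F p /\ f p = q.

Definition preperiodic k (f : tpoint k -> tpoint k) (p : tpoint k) : Prop :=
  exists a b : nat, (a < b)%N /\ iter a f p = iter b f p.

End Toric.

(* Main.v *)
Require Import Defs.
From mathcomp Require Import all_boot all_order all_algebra all_field.
From mathcomp Require Import ring.
From Stdlib Require Import FunctionalExtensionality.
Set Implicit Arguments. Unset Strict Implicit. Unset Printing Implicit Defensive.
Import Order.TTheory GRing.Theory Num.Theory.
Local Open Scope ring_scope.

Section Aux.
Variable n : nat.
Implicit Types (h : seq (algC * 'rV[int]_n)).

Definition grp h (ms : 'rV[int]_n) : algC := \sum_(c <- h | c.2 == ms) c.1.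

Lemma grp0_sum h (chi : 'rV[int]_n -> algC) :
  (forall ms, grp h ms = 0) -> \sum_(c <- h) c.1 * chi c.2 = 0.
Proof.
move: {2}(size h) (leqnn (size h)) => s; elim: s h => [|s IH] [|c0 t] //= Hs Hg;
  try by rewrite big_nil.
rewrite big_cons (bigID (fun c => c.2 == c0.2)) /=.
have -> : \sum_(i <- t | i.2 == c0.2) i.1 * chi i.2 = chi c0.2 * \sum_(i <- t | i.2 == c0.2) i.1.
  rewrite mulr_sumr; apply: eq_bigr => c /eqP ->; by rewrite mulrC.
have E : c0.1 + \sum_(i <- t | i.2 == c0.2) i.1 = 0.
  by have := Hg c0.2; rewrite /grp big_cons eqxx.
rewrite addrA [c0.1 * _]mulrC -mulrDr E mulr0 add0r.
rewrite -big_filter; apply: IH.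
  by rewrite size_filter (leq_trans (count_size _ _)).
move=> ms; rewrite /grp big_filter_cond.
case: (eqVneq ms c0.2) => [->|Hne].
  by rewrite big1 // => c /andP [/negbTE ->].
apply: etrans (Hg ms); rewrite /grp big_cons eq_sym (negbTE Hne).
apply: eq_bigl => c /=; case: (eqVneq c.2 ms) => [->|]; by rewrite ?Hne ?andbF.
Qed.

Definition chi (m : 'rV[int]_n) (z : 'I_n -> algC) : algC := \prod_i z i ^ (m 0 i).
Definition torsion (z : 'I_n -> algC) : Prop := exists2 N, (0 < N)%N & forall i, z i ^+ N = 1.

Lemma tors_neq0 z i : torsion z -> z i != 0.
Proof.
case=> N HN Hz; apply/eqP => E; have := Hz i; rewrite E expr0n.
by case: N HN {Hz} => // N _ /= /eqP; rewrite eq_sym oner_eq0.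
Qed.

Lemma chiM m y z : chi m (fun i => y i * z i) = chi m y * chi m z.
Proof. by rewrite /chi -big_split; apply: eq_bigr => i _; rewrite expfzMl. Qed.

Lemma chi1 m : chi m (fun _ => 1) = 1.
Proof. by rewrite /chi big1 // => i _; rewrite exp1rz. Qed.

Lemma tors1 : torsion (fun _ => 1).
Proof. by exists 1%N => // i; rewrite expr1n. Qed.

Lemma torsM y z : torsion y -> torsion z -> torsion (fun i => y i * z i).
Proof.
case=> N HN Hy [M HM Hz]; exists (N * M)%N; first by rewrite muln_gt0 HN.
by move=> i; rewrite exprMn {2}mulnC !exprM Hy Hz !expr1n mulr1.
Qed.

Lemma chi_sep m1 m0 : m1 != m0 -> exists2 y, torsion y & chi m1 y != chi m0 y.
Proof.
move=> Hne.
have [i Hi] : exists i, m1 0 i != m0 0 i.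
  case: (pickP (fun i => m1 0 i != m0 0 i)) => [i Hi|H]; first by exists i.
  by case/eqP: Hne; apply/rowP => j; have := H j => /negbFE /eqP.
set a := m1 0 i; set b := m0 0 i.
have HN : (0 < `|a - b|.+1)%N by [].
have [ze Hze] := C_prim_root_exists HN.
have ze0 : ze != 0.
  apply/eqP => E; have := prim_expr_order Hze; rewrite E expr0n /= => /eqP.
  by rewrite eq_sym oner_eq0.
pose y := fun j => if j == i then ze else 1.
have Hy : forall m, chi m y = ze ^ (m 0 i).
  move=> m; rewrite /chi (bigD1 i) // /y eqxx big1 /= ?mulr1 // => j /negbTE ->.
  by rewrite exp1rz.
exists y.
  exists `|a - b|.+1 => // j; rewrite /y; case: (j == i); last by rewrite expr1n.
  exact: prim_expr_order.
rewrite !Hy; apply/eqP => E.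
have E1 : ze ^ (a - b) = 1.
  apply: (mulIf (expfz_neq0 b ze0)); rewrite mul1r -expfzDr // subrK; exact: E.
have Hd : a - b != 0 by rewrite subr_eq0.
have E2 : ze ^+ `|a - b| = 1.
  move: E1 Hd; case: (a - b) => k //=.
  by move=> /(congr1 (fun x => x^-1)); rewrite invrK invr1.
have := prim_order_dvd Hze `|a - b|; rewrite E2 eqxx => /dvdn_leq.
rewrite absz_gt0 Hd ltnn => H; by have := H isT.
Qed.

Lemma artin h :
  (forall z, torsion z -> \sum_(c <- h) c.1 * chi c.2 z = 0) -> forall ms, grp h ms = 0.
Proof.
move: {2}(size h) (leqnn (size h)) => s; elim: s h => [|s IH] [|c0 t] //= Hs Hh;
  try by move=> ms; rewrite /grp big_nil.
set m0 := c0.2.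
have Hne : forall ms, ms != m0 -> grp (c0 :: t) ms = 0.
  move=> ms Hms.
  have Ht : forall y, torsion y -> (chi ms y - chi m0 y) * grp t ms = 0.
    move=> y Hy.
    pose ty := [seq (c.1 * (chi c.2 y - chi m0 y), c.2) | c <- t].
    have := IH ty; rewrite size_map => /(_ Hs).
    have Hty : forall z, torsion z -> \sum_(c <- ty) c.1 * chi c.2 z = 0.
      move=> z Hz; rewrite big_map /=.
      have H1 := Hh _ (torsM Hy Hz); have H2 := Hh _ Hz.
      rewrite big_cons in H1; rewrite big_cons in H2.
      have -> : \sum_(j <- t) j.1 * (chi j.2 y - chi m0 y) * chi j.2 z =
         \sum_(j <- t) j.1 * chi j.2 (fun i => y i * z i) - chi m0 y * \sum_(j <- t) j.1 * chi j.2 z.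
        rewrite mulr_sumr -sumrB; apply: eq_bigr => j _; rewrite chiM; ring.
      move: H1 H2; rewrite chiM -/m0.
      move: (\sum_(j <- t) j.1 * chi j.2 (fun i => y i * z i)) (\sum_(j <- t) j.1 * chi j.2 z) => S1 S2 H1 H2.
      have -> : S1 = - (c0.1 * (chi m0 y * chi m0 z)) by apply/eqP; rewrite -addr_eq0 addrC H1.
      have -> : S2 = - (c0.1 * chi m0 z) by apply/eqP; rewrite -addr_eq0 addrC H2.
      ring.
    move=> /(_ Hty ms) E; apply: etrans E; rewrite /grp big_map /= mulr_sumr.
    by apply: eq_bigr => j /eqP ->; rewrite mulrC.
  have [y Hy Hsep] := chi_sep Hms.
  have := Ht y Hy => /eqP; rewrite mulf_eq0 subr_eq0 (negbTE Hsep) /= => /eqP E.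
  by rewrite /grp big_cons eq_sym (negbTE Hms).
move=> ms; case: (eqVneq ms m0) => [->|]; last exact: Hne.
have H0 := Hh _ tors1.
rewrite (bigID (fun c => c.2 == m0)) /= in H0.
have E1 : \sum_(i <- c0 :: t | i.2 == m0) i.1 * chi i.2 (fun=> 1) = grp (c0 :: t) m0.
  by apply: eq_bigr => j _; rewrite chi1 mulr1.
have E2 : \sum_(i <- c0 :: t | i.2 != m0) i.1 * chi i.2 (fun=> 1) = 0.
  rewrite -big_filter; have G := grp0_sum (fun m => chi m (fun=>1)) (h := [seq x <- c0 :: t | x.2 != m0]).
  apply: G => ms1.
  rewrite /grp big_filter_cond; case: (eqVneq ms1 m0) => [->|Hms].
    by rewrite big1 // => c /andP [/negbTE ->].
  apply: etrans (Hne ms1 Hms); apply: eq_bigl => c /=.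
  by case: (eqVneq c.2 ms1) => [->|]; rewrite ?Hms ?andbF.
by rewrite E1 E2 addr0 in H0.
Qed.

End Aux.

Section T.
Variable n : nat.

Lemma pairZ_mx (m v : 'rV[int]_n) : pairZ m v = (m *m v^T) 0 0.
Proof. by rewrite /pairZ !mxE; apply: eq_bigr => i _; rewrite !mxE. Qed.

Lemma pairQ_mx (m v : 'rV[rat]_n) : pairQ m v = (m *m v^T) 0 0.
Proof. by rewrite /pairQ !mxE; apply: eq_bigr => i _; rewrite !mxE. Qed.

Lemma pairQ_toQ (m v : 'rV[int]_n) : pairQ (toQ m) (toQ v) = (pairZ m v)%:~R.
Proof.
rewrite pairQ_mx pairZ_mx /toQ map_trmx -map_mxM mxE //.
Qed.

Lemma pairZ0 (v : 'rV[int]_n) : pairZ 0 v = 0.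
Proof. by rewrite /pairZ big1 // => i _; rewrite mxE mul0r. Qed.

Lemma pairZD (m m' v : 'rV[int]_n) : pairZ (m + m') v = pairZ m v + pairZ m' v.
Proof. by rewrite /pairZ -big_split; apply: eq_bigr => i _; rewrite mxE mulrDl. Qed.

Lemma in_perp0 (s : cone n) : in_perp s 0.
Proof. by apply/allP => g _; rewrite pairZ0. Qed.

Lemma in_perpD (s : cone n) m m' : in_perp s m -> in_perp s m' -> in_perp s (m + m').
Proof.
move=> /allP H /allP H'; apply/allP => g Hg.
by rewrite pairZD (eqP (H g Hg)) (eqP (H' g Hg)) addr0.
Qed.

Lemma mem_in_cone (s : cone n) g : g \in s -> in_cone s (toQ g).
Proof.
move=> Hg; have Hi : (index g s < size s)%N by rewrite index_mem.
exists (fun i => ((i : nat) == index g s)%:R); split.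
  by move=> i; case: (_ == _).
rewrite (bigD1 (Ordinal Hi)) //= eqxx scale1r nth_index // big1 ?addr0 //.
move=> i Hne; have /negbTE -> : (i : nat) != index g s.
  by apply: contra Hne => /eqP E; apply/eqP; apply: val_inj.
by rewrite scale0r.
Qed.

Lemma perp_cone (t : cone n) m u : in_perp t m -> in_cone t u -> pairQ (toQ m) u = 0.
Proof.
move=> /allP Hp [l [_ ->]].
have -> : pairQ (toQ m) (\sum_i l i *: toQ (nth 0 t i)) =
          \sum_i l i * pairQ (toQ m) (toQ (nth 0 t i)).
  rewrite pairQ_mx.
  have -> : (\sum_i l i *: toQ t`_i)^T = \sum_i l i *: (toQ t`_i)^T.
    by apply/matrixP => a b; rewrite !mxE !summxE; apply: eq_bigr => i _; rewrite !mxE.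
  rewrite mulmx_sumr summxE; apply: eq_bigr => i _.
  by rewrite pairQ_mx -scalemxAr mxE.
rewrite big1 // => i _; rewrite pairQ_toQ (eqP (Hp _ (mem_nth 0 (ltn_ord i)))).
by rewrite mulr0z mulr0.
Qed.

Lemma perp_pull (s t : cone n) (phi : 'M[int]_n) m :
  (forall u, in_cone s u -> in_cone t (u *m phiQ phi)) ->
  in_perp t m -> in_perp s (m *m phi^T).
Proof.
move=> Hc Hp; apply/allP => g Hg.
have := perp_cone Hp (Hc _ (mem_in_cone Hg)).
rewrite pairQ_mx pairZ_mx /phiQ /toQ trmx_mul mulmxA !map_trmx -!map_mxM mxE.
by move/eqP; rewrite intr_eq0.
Qed.

Lemma expz_sum (x : algC) (I : Type) (r : seq I) (e : I -> int) :
  x != 0 -> x ^ (\sum_(i <- r) e i) = \prod_(i <- r) x ^ e i.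
Proof.
move=> Hx; apply: (big_morph (fun a => x ^ a)) => [a b|]; [exact: expfzDr | exact: expr0z].
Qed.

Lemma prodXz (I : Type) (r : seq I) (a : I -> algC) (e : int) :
  \prod_(i <- r) a i ^ e = (\prod_(i <- r) a i) ^ e.
Proof.
symmetry; apply: (big_morph (fun x : algC => x ^ e)) => [x y|]; [exact: expfzMl | exact: exp1rz].
Qed.

Definition Gz (phi : 'M[int]_n) (z : 'I_n -> algC) : 'I_n -> algC :=
  fun j => \prod_i z i ^ (phi i j).

Definition ntors N (z : 'I_n -> algC) := forall i, z i ^+ N = 1.

Lemma ntors_tors N z : (0 < N)%N -> ntors N z -> torsion z.
Proof. by move=> HN Hz; exists N. Qed.

Lemma Gz_ntors phi N z : ntors N z -> ntors N (Gz phi z).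
Proof.
move=> Hz j; rewrite /Gz.
have -> : (\prod_i z i ^ phi i j) ^+ N = (\prod_i z i ^ phi i j) ^ (N%:Z) by [].
rewrite -prodXz big1 // => i _; rewrite exprz_exp mulrC -exprz_exp.
have -> : z i ^ (N%:Z) = 1 by exact: Hz.
by rewrite exp1rz.
Qed.

Lemma ntors_neq0 N z i : (0 < N)%N -> ntors N z -> z i != 0.
Proof. by move=> HN Hz; apply: tors_neq0; exists N. Qed.

Lemma chi_pull phi (z : 'I_n -> algC) m : torsion z -> chi (m *m phi^T) z = chi m (Gz phi z).
Proof.
move=> Hz; rewrite /chi /Gz.
under eq_bigr => i _ do rewrite mxE (expz_sum _ _ (tors_neq0 i Hz)).
rewrite exchange_big /=; apply: eq_bigr => j _; rewrite -prodXz.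
by apply: eq_bigr => i _; rewrite mxE exprz_exp mulrC.
Qed.

Lemma chi0 (z : 'I_n -> algC) : chi 0 z = 1.
Proof. by rewrite /chi big1 // => i _; rewrite mxE expr0z. Qed.

Lemma chiD (z : 'I_n -> algC) m m' : torsion z -> chi (m + m') z = chi m z * chi m' z.
Proof.
move=> Hz; rewrite /chi -big_split; apply: eq_bigr => i _.
by rewrite mxE expfzDr // tors_neq0.
Qed.

Lemma chi_neq0 (z : 'I_n -> algC) m : torsion z -> chi m z != 0.
Proof. by move=> Hz; apply/prodf_neq0 => i _; rewrite expfz_neq0 // tors_neq0. Qed.

Variable k : nat.
Variable F : 'I_k -> cone n.

Definition mkpt (j : 'I_k) (z : 'I_n -> algC) : tpoint n k :=
  (j, fun m => if in_perp (F j) m then chi m z else 0).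

Lemma mkpt_point j z : torsion z -> is_point F (mkpt j z).
Proof.
move=> Hz; split => /=.
- by rewrite in_perp0 chi0.
- by move=> m; case: ifP => _; rewrite ?chi_neq0 ?eqxx.
- by move=> m m' H1 H2; rewrite in_perpD // H1 H2 chiD.
Qed.

Lemma point_f phi f p : is_toric_morphism F phi f -> is_point F p -> is_point F (f p).
Proof.
move=> [_ Hm] Hp; have [Hc _ Hf] := Hm p Hp; case: Hp => H0 Hnz Hhom; split.
- by rewrite Hf in_perp0 mul0mx H0.
- move=> m; rewrite Hf; case: ifP => Hm'; last by rewrite eqxx.
  by rewrite Hnz (perp_pull Hc Hm').
- move=> m m' Hm1 Hm2; rewrite !Hf in_perpD // Hm1 Hm2 mulmxDl Hhom //;
  exact: (perp_pull Hc).
Qed.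

Lemma f_mkpt phi f j z : is_toric_morphism F phi f -> torsion z ->
  f (mkpt j z) = mkpt (f (mkpt j z)).1 (Gz phi z).
Proof.
move=> [_ Hm] Hz; have [Hc _ Hf] := Hm _ (mkpt_point j Hz).
rewrite [LHS]surjective_pairing /mkpt; congr pair.
apply: functional_extensionality => m; rewrite Hf /=.
case: ifP => // Hm'; by rewrite (perp_pull Hc Hm') chi_pull.
Qed.

Lemma mkpt_preper phi f j z : is_toric_morphism F phi f -> torsion z ->
  preperiodic f (mkpt j z).
Proof.
move=> Hm [N HN Hz].
have [ze Hze] := C_prim_root_exists HN.
pose zs a := iter a (Gz phi) z.
have Hzs : forall a, ntors N (zs a).
  by elim=> [|a IH] //=; exact: Gz_ntors.
pose xs a := iter a f (mkpt j z).
have Hxs : forall a, xs a = mkpt (xs a).1 (zs a).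
  elim=> [|a IH] //=; rewrite -/(xs a) IH.
  exact: f_mkpt (ntors_tors HN (Hzs a)).
pose code (w : 'I_n -> algC) := [ffun i => [pick e : 'I_N | w i == ze ^+ e]].
have codeK : forall w i, ntors N w -> exists e, code w i = Some e /\ w i = ze ^+ e.
  move=> w i Hw; rewrite /code ffunE; case: pickP => [e /eqP He|Hn]; first by exists e.
  have [e He] := prim_rootP Hze (Hw i); by have := Hn e; rewrite He eqxx.
pose K := #|{: ('I_k * {ffun 'I_n -> option 'I_N})%type}|.
pose c := fun a : 'I_K.+1 => ((xs a).1, code (zs a)).
have : ~~ injectiveb c.
  apply/negP => /injectiveP Hinj; have := leq_card c Hinj.
  by rewrite card_ord ltnn.
case/injectivePn => x [y Hxy Hc].
have Heq : xs x = xs y.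
  rewrite (Hxs x) (Hxs y); have [H1 H2] : (xs x).1 = (xs y).1 /\ code (zs x) = code (zs y).
    by move: Hc; rewrite /c => -[-> ->].
  rewrite H1 /mkpt; congr pair; apply: functional_extensionality => m.
  case: ifP => // _; apply: eq_bigr => i _.
  have [e [E1 E2]] := codeK (zs x) i (Hzs x).
  have [e' [E1' E2']] := codeK (zs y) i (Hzs y).
  move: E1; rewrite H2 E1' => -[Ee]; by rewrite E2 E2' Ee.
case: (ltngtP x y) => Hlt.
- by exists x, y.
- by exists y, x.
- by move: Hxy; rewrite -val_eqE /= Hlt eqxx.
Qed.

End T.

Theorem mainTheorem5 (n k : nat) (F : 'I_k -> cone n) (phi : 'M[int]_n)
    (f : tpoint n k -> tpoint n k) :
  is_fan F -> Qfactorial_fan F -> projective_fan F ->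
  is_toric_morphism F phi f -> surjective_on F f ->
  zdense F (fun p => is_point F p /\ preperiodic f p).
Proof.
move=> _ _ _ Hm _ Z HZ HS p Hp.
have [G [_ HG]] := HZ p.1.
have Hch : forall q : tpoint n k, q.1 = p.1 -> in_chart F p.1 q.
  move=> q Hq; rewrite /in_chart Hq; exists 0; split; first by apply/allP => g _; rewrite pairZ0.
  move=> u; have -> : pairQ (toQ 0) u = 0.
    by rewrite /pairQ big1 // => i _; rewrite !mxE /= mul0r.
  by split => [H|[]].
apply/(HG p Hp (Hch p erefl)) => g Gg.
pose h := [seq (c.1 * (in_perp (F p.1) c.2)%:R, c.2) | c <- g].
have Ht : forall z, torsion z -> \sum_(c <- h) c.1 * chi c.2 z = 0.
  move=> z Hz.
  have Hq := mkpt_point F p.1 Hz.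
  have HZq : Z (mkpt F p.1 z) by apply: (HS _ Hq); split; [exact: Hq | exact: mkpt_preper Hm Hz].
  have := (HG _ Hq (Hch _ erefl)).1 HZq g Gg.
  rewrite /eval_l big_map => E; apply: (etrans _ E); apply: eq_bigr => c _ /=.
  by case: ifP => _; rewrite ?mulr1 ?mulr0 ?mul0r.
have := grp0_sum (fun m => p.2 m) (artin Ht).
rewrite /eval_l big_map => E; apply: (etrans _ E); apply: eq_bigr => c _ /=.
have [_ Hnz _] := Hp; case Hc: (in_perp (F p.1) c.2); first by rewrite mulr1.
by have := Hnz c.2; rewrite Hc => /negbFE /eqP ->; rewrite !mulr0.
Qed.
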